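(* Let $G$ be a strong $(\ell,d)$-graph with strong $(\ell,d)$-partitions $\pi$ and $\pi'$. Then $p(\pi)=p(\pi')$.
   Context: For a graph $G$ and $U,W\subseteq V(G)$, $\Delta(U,W)=\max\{|N(u)\cap W|,|N(x)\cap U|:u\in U,x\in W\}$ and $\overline\Delta(U,W)$ is defined the same way with $\overline N(v)=V(G)\setminus(N(v)\cup\{v\})$ replacing $N(v)$. A partition $\{V_1,\dots,V_{\ell'}\}$ of $V(G)$ is an $(\ell,d)$-partition if $\ell'\le\ell$ and for each pair of not necessarily distinct $i,j$, $V_i$ is $d$-sparse with respect to $V_j$ ($\Delta(V_i,V_j)\le d$) or $d$-dense with respect to $V_j$ ($\overline\Delta(V_i,V_j)\le d$). It is strong if each bag has at least $5\cdot2^\ell d$ vertices; $G$ is a strong $(\ell,d)$-graph if it has a strong $(\ell,d)$-partition. For a strong $(\ell,d)$-partition $\pi$, define $V_i\sim V_j$ iff for every bag $V_k$, either $V_k$ is $d$-dense with respect to both $V_i$ and $V_j$, or $d$-sparse with respect to both; $p(\pi)$ is the partition of $V(G)$ whose parts are the unions of the bags in each $\sim$-equivalence class. *)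

(* Defs.v *)
From mathcomp Require Import all_boot all_order.
Set Implicit Arguments. Unset Strict Implicit. Unset Printing Implicit Defensive.

Definition simple_graph (T : finType) (e : rel T) : Prop :=
  symmetric e /\ irreflexive e.

Section Defs.
Variables (T : finType) (e : rel T).

Definition nbhd (v : T) : {set T} := [set u | e v u].
Definition conbhd (v : T) : {set T} := ~: (nbhd v :|: [set v]).

Definition Delta (U W : {set T}) : nat :=
  maxn (\max_(u in U) #|nbhd u :&: W|) (\max_(x in W) #|nbhd x :&: U|).
Definition coDelta (U W : {set T}) : nat :=
  maxn (\max_(u in U) #|conbhd u :&: W|) (\max_(x in W) #|conbhd x :&: U|).

Definition sparse (d : nat) (U W : {set T}) : bool := Delta U W <= d.
Definition dense (d : nat) (U W : {set T}) : bool := coDelta U W <= d.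

Definition ld_partition (l d : nat) (P : {set {set T}}) : Prop :=
  partition P [set: T] /\ #|P| <= l /\
  (forall Vi Vj, Vi \in P -> Vj \in P -> sparse d Vi Vj \/ dense d Vi Vj).

Definition strong_ld_partition (l d : nat) (P : {set {set T}}) : Prop :=
  ld_partition l d P /\ (forall Vi, Vi \in P -> 5 * 2 ^ l * d <= #|Vi|).

Definition strong_ld_graph (l d : nat) : Prop :=
  exists P, strong_ld_partition l d P.

Definition bag_equiv (d : nat) (P : {set {set T}}) (Vi Vj : {set T}) : bool :=
  [forall Vk in P, (dense d Vk Vi && dense d Vk Vj) ||
                   (sparse d Vk Vi && sparse d Vk Vj)].

Definition p_of (d : nat) (P : {set {set T}}) : {set {set T}} :=
  [set (\bigcup_(B in P | bag_equiv d P A B) B) | A in P].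

End Defs.

(* Main.v *)
Require Import Defs.
From mathcomp Require Import all_boot all_order.
From mathcomp Require Import zify.
Set Implicit Arguments. Unset Strict Implicit. Unset Printing Implicit Defensive.

Section Aux.
Variables (T : finType) (e : rel T).

Definition Xs (u v : T) : {set T} :=
  [set w | (e u w != e v w) && (w != u) && (w != v)].

Lemma XsC u v : Xs u v = Xs v u.
Proof. by apply/setP => w; rewrite !inE eq_sym andbAC. Qed.

Lemma dense_bound d U W x : dense e d U W -> x \in W -> #|conbhd e x :&: U| <= d.
Proof.
move=> H xW; apply: leq_trans H; rewrite /coDelta.
apply: leq_trans (leq_maxr _ _).
exact: (@leq_bigmax_cond _ (fun x => x \in W) (fun x => #|conbhd e x :&: U|) x xW).
Qed.

Lemma sparse_bound d U W x : sparse e d U W -> x \in W -> #|nbhd e x :&: U| <= d.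
Proof.
move=> H xW; apply: leq_trans H; rewrite /Delta.
apply: leq_trans (leq_maxr _ _).
exact: (@leq_bigmax_cond _ (fun x => x \in W) (fun x => #|nbhd e x :&: U|) x xW).
Qed.

Lemma card_bigcup_le (P : {set {set T}}) (F : {set T} -> {set T}) :
  #|\bigcup_(B in P) F B| <= \sum_(B in P) #|F B|.
Proof.
elim/big_rec2: _; first by rewrite cards0.
move=> B n S _ h; apply: leq_trans (leq_card_setU _ _).1 _.
by rewrite leq_add2l.
Qed.

Lemma upper_bag d (Vk A B : {set T}) (u v : T) : u \in A -> v \in B ->
  (dense e d Vk A && dense e d Vk B) || (sparse e d Vk A && sparse e d Vk B) ->
  #|Xs u v :&: Vk| <= d + d.
Proof.
move=> uA vB /orP[/andP[h1 h2]|/andP[h1 h2]].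
  apply: leq_trans (leq_add (dense_bound h1 uA) (dense_bound h2 vB)).
  apply: leq_trans (leq_card_setU (conbhd e u :&: Vk) (conbhd e v :&: Vk)).1.
  apply: subset_leq_card; apply/subsetP => w; rewrite !inE.
  move=> /andP[/andP[/andP[ne nu] nv] wV]; move: ne.
  by rewrite ?(negbTE nu) ?(negbTE nv) wV; case: (e u w); case: (e v w).
apply: leq_trans (leq_add (sparse_bound h1 uA) (sparse_bound h2 vB)).
apply: leq_trans (leq_card_setU (nbhd e u :&: Vk) (nbhd e v :&: Vk)).1.
apply: subset_leq_card; apply/subsetP => w; rewrite !inE.
move=> /andP[/andP[/andP[ne nu] nv] wV]; move: ne.
  by rewrite ?(negbTE nu) ?(negbTE nv) wV; case: (e u w); case: (e v w).
Qed.

Lemma lower_sub (Vk : {set T}) (u v : T) :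
  Vk \subset ((Xs u v :|: (conbhd e u :&: Vk)) :|: (nbhd e v :&: Vk)) :|: [set u; v].
Proof.
apply/subsetP => w wV; rewrite !inE wV /=.
case: (w =P u) => [->|nu]; first by rewrite !orbT.
case: (w =P v) => [->|nv]; first by rewrite !orbT.
by case: (e u w); case: (e v w); rewrite ?orbT.
Qed.


Lemma sparse_single (he : irreflexive e) d u : sparse e d [set u] [set u].
Proof.
rewrite /sparse /Delta !big_set1.
have -> : #|nbhd e u :&: [set u]| = 0.
  apply/eqP; rewrite cards_eq0; apply/eqP/setP => x; rewrite !inE.
  by case: (x =P u) => [->|]; rewrite ?he ?andbF.
by rewrite maxnn.
Qed.

Lemma dense_single d u : dense e d [set u] [set u].
Proof.
rewrite /dense /coDelta !big_set1.
have -> : #|conbhd e u :&: [set u]| = 0.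
  apply/eqP; rewrite cards_eq0; apply/eqP/setP => x; rewrite !inE.
  by case: (x =P u) => [->|]; rewrite ?eqxx ?orbT ?andbF.
by rewrite maxnn.
Qed.

Section Main.
Variables (he : irreflexive e) (l d : nat) (P : {set {set T}}).
Hypothesis hP : strong_ld_partition e l d P.

Lemma lower (Vk A B : {set T}) (u v : T) :
  Vk \in P -> A \in P -> B \in P -> u \in A -> v \in B ->
  dense e d Vk A -> sparse e d Vk B ->
  ~~ ((dense e d Vk A && dense e d Vk B) || (sparse e d Vk A && sparse e d Vk B)) ->
  (d + d) * l < #|Xs u v|.
Proof.
case: hP => [[hpart [hcard hsd]] hsize].
case/and3P: hpart => /eqP hcov htriv h0.
move=> hk hA hB uA vB hD hS hn.
have hAB : A != B.
  by apply/eqP => eAB; move: hn; rewrite -eAB hD; rewrite -eAB in hS; rewrite hS.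
have nSA : ~~ sparse e d Vk A by apply: contra hn => h; rewrite h hS orbT.
have nDB : ~~ dense e d Vk B by apply: contra hn => h; rewrite h hD.
have b1 := dense_bound hD uA.
have b2 := sparse_bound hS vB.
have hsub := lower_sub Vk u v.
have hcardV : #|Vk| <= #|Xs u v| + #|conbhd e u :&: Vk| + #|nbhd e v :&: Vk| + 2.
  apply: leq_trans (subset_leq_card hsub) _.
  apply: leq_trans (leq_card_setU _ _).1 _.
  apply: leq_add; last by rewrite cards2; case: (u != v).
  apply: leq_trans (leq_card_setU _ _).1 _.
  apply: leq_add => //.
  exact: (leq_card_setU _ _).1.
have hs := hsize Vk hk.
rewrite ltnNge; apply/negP => hX.
case: d hX hD hS hn nSA nDB b1 b2 hcardV hs hsd hsize => [|d'] hX hD hS hn nSA nDB b1 b2 hcardV hs hsd hsize; last first.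
  have := ltn_expl l (ltnSn 1). nia.
have E1 : Xs u v = set0 by apply/eqP; rewrite -cards_eq0; move: hX; rewrite add0n mul0n leqn0.
have E2 : conbhd e u :&: Vk = set0 by apply/eqP; rewrite -cards_eq0 -leqn0.
have E3 : nbhd e v :&: Vk = set0 by apply/eqP; rewrite -cards_eq0 -leqn0.
rewrite E1 E2 E3 !set0U in hsub.
have [w wV] : exists w, w \in Vk.
  case: (set_0Vmem Vk) => [E|[w hw]]; last by exists w.
  by move: h0; rewrite -E hk.
have vcov : forall x, x \in cover P by move=> x; rewrite hcov inE.
case uV: (u \in Vk).
  have eA : Vk = A by rewrite -(def_pblock htriv hk uV) (def_pblock htriv hA uA).
  have vA : v \notin A.
    apply/negP => vA; move: hAB; by rewrite -(def_pblock htriv hA vA) (def_pblock htriv hB vB) eqxx.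
  have eV : Vk = [set u].
    apply/eqP; rewrite eqEsubset; rewrite sub1set uV andbT.
    apply/subsetP => x xV; have := subsetP hsub x xV; rewrite !inE.
    case/orP => // /eqP ex; move: vA; by rewrite -eA -ex xV.
  by move: nSA; rewrite -eA eV sparse_single.
have eV : Vk = [set v].
  apply/eqP; rewrite eqEsubset.
  have vV : v \in Vk.
    have := subsetP hsub w wV; rewrite !inE; case/orP => /eqP ex.
      by move: uV; rewrite -ex wV.
    by rewrite -ex.
  rewrite sub1set vV andbT.
  apply/subsetP => x xV; have := subsetP hsub x xV; rewrite !inE.
  case/orP => // /eqP ex; move: uV; by rewrite -ex xV.
have eB : Vk = B.
  have vV : v \in Vk by rewrite eV set11.
  by rewrite -(def_pblock htriv hk vV) (def_pblock htriv hB vB).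
by move: nDB; rewrite -eB eV dense_single.
Qed.

Lemma equiv_iff (A B : {set T}) (u v : T) :
  A \in P -> B \in P -> u \in A -> v \in B ->
  bag_equiv e d P A B = (#|Xs u v| <= (d + d) * l).
Proof.
move=> hA hB uA vB.
have hP0 := hP.
case: hP0 => [[hpart [hcard hsd]] hsize].
case/and3P: hpart => /eqP hcov htriv h0.
apply/idP/idP.
  move/forall_inP => hall.
  have sub : Xs u v \subset \bigcup_(Vk in P) (Xs u v :&: Vk).
    apply/subsetP => w wX; apply/bigcupP; exists (pblock P w).
      by apply: pblock_mem; rewrite hcov inE.
    by rewrite inE wX mem_pblock hcov inE.
  apply: leq_trans (subset_leq_card sub) _.
  apply: leq_trans (card_bigcup_le _ _) _.
  apply: (@leq_trans (\sum_(Vk in P) (d + d))).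
    by apply: leq_sum => Vk hk; exact: upper_bag uA vB (hall Vk hk).
  by rewrite sum_nat_const mulnC leq_mul2l hcard orbT.
move=> hX; apply/forall_inP => Vk hk; apply/negPn/negP => hn.
case: (hsd Vk A hk hA) => hA1; case: (hsd Vk B hk hB) => hB1.
- by move: hn; rewrite hA1 hB1 orbT.
- have hn' : ~~ ((dense e d Vk B && dense e d Vk A) || (sparse e d Vk B && sparse e d Vk A)).
    by rewrite andbC [sparse _ _ _ B && _]andbC.
  have := lower hk hB hA vB uA hB1 hA1 hn'.
  by rewrite XsC ltnNge hX.
- have := lower hk hA hB uA vB hA1 hB1 hn.
  by rewrite ltnNge hX.
- by move: hn; rewrite hA1 hB1.
Qed.

Lemma pof_eq :
  p_of e d P = [set [set v | #|Xs u v| <= (d + d) * l] | u in [set: T]].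
Proof.
have hP0 := hP.
case: hP0 => [[hpart [hcard hsd]] hsize].
case/and3P: hpart => /eqP hcov htriv h0.
have vcov : forall x, x \in cover P by move=> x; rewrite hcov inE.
have part : forall A u, A \in P -> u \in A ->
   \bigcup_(B in P | bag_equiv e d P A B) B = [set v | #|Xs u v| <= (d + d) * l].
  move=> A u hA uA; apply/setP => v; rewrite inE; apply/bigcupP/idP.
    case=> B /andP[hB hE] vB; by rewrite -(equiv_iff hA hB uA vB).
  move=> h; exists (pblock P v); last by rewrite mem_pblock.
  rewrite pblock_mem //=.
  by rewrite (@equiv_iff _ _ _ v hA (pblock_mem (vcov v)) uA) // mem_pblock.
apply/setP => S; apply/imsetP/imsetP.
  case=> A hA ->.
  have [u uA] : exists u, u \in A.
    case: (set_0Vmem A) => [E|[w hw]]; last by exists w.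
    by move: h0; rewrite -E hA.
  by exists u; rewrite ?inE // (part A u hA uA).
case=> u _ ->; exists (pblock P u); first exact: pblock_mem.
by rewrite (part _ u (pblock_mem (vcov u))) // mem_pblock.
Qed.

End Main.
End Aux.

Theorem theorem2p6 (T : finType) (e : rel T) (l d : nat)
  (P P' : {set {set T}}) :
  simple_graph e ->
  strong_ld_graph e l d ->
  strong_ld_partition e l d P ->
  strong_ld_partition e l d P' ->
  p_of e d P = p_of e d P'.
Proof.
case=> _ he _ hP hP'.
by rewrite (pof_eq he hP) (pof_eq he hP').
Qed.
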